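(* Let $n\geq 2$, $1\leq k\leq n-1$, $w=w_1\cdots w_n\in\mathfrak{S}_n$, and let the section $w_i\cdots w_j$ be $k$-ascending. (1) If there is $t>j$ with $w_j<w_t$ and there is no $k$-down in $w_j\cdots w_t$, then there is $t'$ with $j<t'\leq t$ such that $w_i\cdots w_j\cdots w_{t'}$ is $k$-ascending. (2) If there is $s<i$ with $w_s<w_i$ and there is no $k$-down in $w_s\cdots w_i$, then there is $s'$ with $s\leq s'<i$ such that $w_{s'}\cdots w_i\cdots w_j$ is $k$-ascending.
   Context: $\mathfrak{S}_n$ is the set of permutations $w=w_1\cdots w_n$ of $\{1,\dots,n\}$. A section of $w$ is a consecutive block $w_sw_{s+1}\cdots w_t$ ($s\le t$). A section $w_s\cdots w_t$ is a $k$-up if $s<t$ and $w_t-w_s\geq k$, and a $k$-down if $s<t$ and $w_s-w_t\geq k$. A $k$-up (or $k$-down) ''in'' the section $w_a\cdots w_b$ means a $k$-up (or $k$-down) $w_s\cdots w_t$ with $a\leq s<t\leq b$. A section $w_i\cdots w_j$ with $i<j$ is $k$-ascending if: $w_i=\min\{w_i,\dots,w_j\}$ and $w_j=\max\{w_i,\dots,w_j\}$; $w_j-w_i\geq k$; and there is no $k$-down in $w_i\cdots w_j$. *)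

(* Defs.v *)
From mathcomp Require Import all_boot all_order all_fingroup.
Set Implicit Arguments. Unset Strict Implicit. Unset Printing Implicit Defensive.

(* A permutation w in S_n is w : 'S_n, positions are 'I_n (0-indexed: position
   p corresponds to w_{p+1}); values are val (w p) in {0,..,n-1}, i.e. the
   paper's values shifted by -1 (irrelevant: only differences/comparisons used). *)

Definition wv n (w : 'S_n) (p : 'I_n) : nat := val (w p).

Definition has_kdown_in n (w : 'S_n) (k : nat) (a b : 'I_n) : Prop :=
  exists s t : 'I_n, [/\ a <= s, s < t, t <= b & wv w t + k <= wv w s].

Definition k_ascending n (w : 'S_n) (k : nat) (i j : 'I_n) : Prop :=
  [/\ i < j,
      (forall p : 'I_n, i <= p <= j -> wv w i <= wv w p),
      (forall p : 'I_n, i <= p <= j -> wv w p <= wv w j),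
      wv w i + k <= wv w j
    & ~ has_kdown_in w k i j].

(* Main.v *)
Require Import Defs.
From mathcomp Require Import all_boot all_order all_fingroup.
From mathcomp Require Import zify.

Theorem lemma2p4 (n : nat) (k : nat) (w : 'S_n) (i j : 'I_n) :
  2 <= n -> 1 <= k <= n - 1 ->
  k_ascending w k i j ->
  (forall t : 'I_n, j < t -> wv w j < wv w t -> ~ has_kdown_in w k j t ->
     exists t' : 'I_n, j < t' <= t /\ k_ascending w k i t') /\
  (forall s : 'I_n, s < i -> wv w s < wv w i -> ~ has_kdown_in w k s i ->
     exists s' : 'I_n, s <= s' < i /\ k_ascending w k s' j).
Proof.
move=> _ /andP[Hk1 _] [Hij Hmin Hmax Hk Hnd]; split.
- move=> t Hjt Hwt Hnd2.
  have Pt : (j <= t) && (t <= t) by apply/andP; split; [exact: ltnW|].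
  case: (@arg_maxnP _ t (fun p : 'I_n => (j <= p) && (p <= t)) (fun p => wv w p) Pt) => t' /andP[Hjt' Ht't] Hm.
  have {}Hm : forall p : 'I_n, (j <= p) && (p <= t) -> wv w p <= wv w t' by move=> p hp; exact: (Hm p hp).
  have Hwt' : wv w t <= wv w t' := Hm t Pt.
  have Hjt'' : j < t'.
    rewrite ltn_neqAle Hjt' andbT; apply/eqP => E.
    by rewrite -(val_inj E) in Hwt'; lia.
  have low : forall p : 'I_n, j <= p <= t' -> wv w j < wv w p + k.
    move=> p /andP[h1 h2]; rewrite ltnNge; apply/negP => h.
    have [] : j < p \/ j = p :> nat by lia.
    + move=> jp; apply: Hnd2; exists j, p; split => //; lia.
    + move=> E; have : wv w j = wv w p by rewrite /wv (val_inj E).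
      lia.
  exists t'; split; first by apply/andP.
  split => //; first by apply: ltn_trans Hjt''.
  + move=> p /andP[h1 h2]; case: (leqP p j) => hp.
    * by apply: Hmin; apply/andP.
    * have := low p; rewrite (ltnW hp) h2 /= => /(_ isT).
      have := Hmin j; rewrite leqnn (ltnW Hij) => /(_ isT); lia.
  + move=> p /andP[h1 h2]; case: (leqP p j) => hp.
    * have := Hmax p; rewrite h1 hp => /(_ isT).
      have := Hm j; rewrite leqnn /= => /(_ (ltnW Hjt)).
      move: Hwt; rewrite /wv => *; lia.
    * by apply: Hm; rewrite (ltnW hp) /=; lia.
  + have := Hm j; rewrite leqnn /= => /(_ (ltnW Hjt)); lia.
  + move=> [a [b [h1 h2 h3 h4]]].
    case: (leqP b j) => hb.
    * by apply: Hnd; exists a, b; split.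
    case: (leqP j a) => ha.
    * apply: Hnd2; exists a, b; split => //; lia.
    * have := Hmax a; rewrite h1 (ltnW ha) => /(_ isT) => hma.
      apply: Hnd2; exists j, b; split => //; lia.
- move=> s Hsi Hws Hnd2.
  have Ps : (s <= s) && (s <= i) by apply/andP; split; [|exact: ltnW].
  case: (@arg_minnP _ s (fun p : 'I_n => (s <= p) && (p <= i)) (fun p => wv w p) Ps) => s' /andP[Hss' Hs'i] Hm.
  have {}Hm : forall p : 'I_n, (s <= p) && (p <= i) -> wv w s' <= wv w p by move=> p hp; exact: (Hm p hp).
  have Hws' : wv w s' <= wv w s := Hm s Ps.
  have Hs'i' : s' < i.
    rewrite ltn_neqAle Hs'i andbT; apply/eqP => E.
    by rewrite (val_inj E) in Hws'; lia.
  have high : forall p : 'I_n, s' <= p <= i -> wv w p < wv w i + k.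
    move=> p /andP[h1 h2]; rewrite ltnNge; apply/negP => h.
    have [] : p < i \/ p = i :> nat by lia.
    + move=> pi; apply: Hnd2; exists p, i; split => //; lia.
    + move=> E; have : wv w i = wv w p by rewrite /wv (val_inj E).
      lia.
  exists s'; split; first by apply/andP.
  split => //.
  + by apply: (ltn_trans Hs'i').
  + move=> p /andP[h1 h2]; case: (leqP i p) => hp.
    * have := Hmin p; rewrite hp h2 => /(_ isT).
      have := Hm i; rewrite leqnn (ltnW Hsi) /= => /(_ isT); lia.
    * by apply: Hm; rewrite (ltnW hp) andbT; lia.
  + move=> p /andP[h1 h2]; case: (leqP i p) => hp.
    * by apply: Hmax; apply/andP.
    * have := high p; rewrite (ltnW hp) h1 /= => /(_ isT). lia.
  + have := Hm i; rewrite leqnn (ltnW Hsi) /= => /(_ isT); lia.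
  + move=> [a [b [h1 h2 h3 h4]]].
    case: (leqP i a) => ha.
    * by apply: Hnd; exists a, b; split.
    case: (leqP b i) => hb.
    * apply: Hnd2; exists a, b; split => //; lia.
    * have := Hmin b; rewrite (ltnW hb) h3 => /(_ isT) => hmb.
      apply: Hnd2; exists a, i; split => //; lia.
Qed.
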